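(* Let $(M,\Delta,S,\varepsilon)$ be a weak Kac algebra with source Cartan subalgebra $N_s$, and write $e=\Delta(1)$. Suppose $N_s\cong\bigoplus_{\alpha=1}^K M_{n_\alpha}(\mathbb{C})$ and let $\{f^\alpha_{pq}\}_{p,q=1,\dots,n_\alpha}^{\alpha=1,\dots,K}$ be a system of matrix units in $N_s$. Then $$e=\sum_\alpha\frac{1}{n_\alpha}\sum_{p,q}f^\alpha_{pq}\otimes S(f^\alpha_{qp}).$$
   Context: All algebras are finite-dimensional over $\mathbb{C}$; $\varsigma$ denotes the flip and $\mu(x\otimes y)=xy$. A weak Kac algebra is a quadruple $(M,\Delta,S,\varepsilon)$ where $M$ is a finite-dimensional $C^*$-algebra; $\Delta:M\to M\otimes M$ is an injective, not necessarily unital, $*$-homomorphism with $(\Delta\otimes\mathrm{id})\Delta=(\mathrm{id}\otimes\Delta)\Delta$; $S:M\to M$ is a linear, unital, antimultiplicative, $*$-preserving bijection with $S^2=\mathrm{id}$ and $(S\otimes S)\circ\Delta=\varsigma\circ\Delta\circ S$; and $\varepsilon:M\to\mathbb{C}$ is linear with $(\varepsilon\otimes\mathrm{id})\Delta=(\mathrm{id}\otimes\varepsilon)\Delta=\mathrm{id}$, $\varepsilon\circ S=\varepsilon$, $\varepsilon(x^* )=\overline{\varepsilon(x)}$, $(\varepsilon\otimes\varepsilon)((x\otimes1)e(1\otimes y))=\varepsilon(xy)$ for all $x,y$, where $e:=\Delta(1)$, and $(\varepsilon_s\otimes\mathrm{id})\Delta(x)=(1\otimes x)e$ for all $x$, where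 $\varepsilon_s:=\mu(S\otimes\mathrm{id})\Delta$. The source Cartan subalgebra is $N_s=\{x\in M:\Delta(x)=e(1\otimes x)=(1\otimes x)e\}$ (a $C^*$-subalgebra of $M$). A system of matrix units $\{f^\alpha_{pq}\}$ means $f^\alpha_{pq}f^\beta_{rs}=\delta_{\alpha\beta}\delta_{qr}f^\alpha_{ps}$, $(f^\alpha_{pq})^*=f^\alpha_{qp}$, $\sum_{\alpha,p}f^\alpha_{pp}=1$, spanning $N_s$. *)

(* Defs.v *)
(* Complex numbers are  R[i]  for  R : realType  (any realType
   is isomorphic to the real numbers, so R[i] is C).
   A finite-dimensional C*-algebra is represented concretely as a unital
   *-subalgebra of n x n complex matrices (star = conjugate transpose), and
   M (x) M as the span of Kronecker products  a *t b  (a, b in M) inside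
   (n*n) x (n*n) matrices.  Linear maps on M (or M (x) M) are given as linear
   maps on the ambient full matrix algebra; tensor products of linear maps
   are their (well-defined) bilinear extensions, computed on matrix units. *)
From HB Require Import structures.
From mathcomp Require Import all_boot all_order all_algebra.
From mathcomp Require Import reals.
From mathcomp Require Import complex mxtens.
Set Implicit Arguments. Unset Strict Implicit. Unset Printing Implicit Defensive.
Import GRing.Theory Num.Theory.
Local Open Scope ring_scope.

Section WKA.
Variables (R : realType) (n : nat).
Local Notation C := (R[i]).

Definition adjmx p q (A : 'M[C]_(p, q)) : 'M[C]_(q, p) := (map_mx Num.conj A)^T.

(* bilinear extension of h : M_n x M_n -> T to M_n (x) M_n = M_(n*n),
   X = \sum X((i,k),(j,l)) E_ij *t E_kl *)
Definition tens_ext (T : lmodType C) (h : 'M[C]_n -> 'M[C]_n -> T)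
    (X : 'M[C]_(n * n)) : T :=
  \sum_(i < n) \sum_(j < n) \sum_(k < n) \sum_(l < n)
    X (mxtens_index (i, k)) (mxtens_index (j, l)) *: h (delta_mx i j) (delta_mx k l).

Definition tens_form (h : 'M[C]_n -> 'M[C]_n -> C) (X : 'M[C]_(n * n)) : C :=
  \sum_(i < n) \sum_(j < n) \sum_(k < n) \sum_(l < n)
    X (mxtens_index (i, k)) (mxtens_index (j, l)) * h (delta_mx i j) (delta_mx k l).

Definition tensmap p q (f : 'M[C]_n -> 'M[C]_p) (g : 'M[C]_n -> 'M[C]_q)
  (X : 'M[C]_(n * n)) : 'M[C]_(p * q) := tens_ext (fun a b => f a *t g b) X.

Definition flipmx (X : 'M[C]_(n * n)) : 'M[C]_(n * n) := tens_ext (fun a b => b *t a) X.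

Definition mulmap (X : 'M[C]_(n * n)) : 'M[C]_n := tens_ext (fun a b => a *m b) X.

Definition epsl (eps : 'M[C]_n -> C) (X : 'M[C]_(n * n)) : 'M[C]_n :=
  tens_ext (fun a b => eps a *: b) X.
Definition epsr (eps : 'M[C]_n -> C) (X : 'M[C]_(n * n)) : 'M[C]_n :=
  tens_ext (fun a b => eps b *: a) X.


(* membership in the algebra M, encoded as a subspace MM of matrices *)
Definition inM m (MM : 'M[C]_(m, n * n)) (x : 'M[C]_n) : Prop := (x \in MM)%MS.

Definition inMM m (MM : 'M[C]_(m, n * n)) (X : 'M[C]_(n * n)) : Prop :=
  exists r (a b : 'I_r -> 'M[C]_n),
    (forall t, inM MM (a t) /\ inM MM (b t)) /\ X = \sum_(t < r) (a t *t b t).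

Definition is_weak_Kac m (MM : 'M[C]_(m, n * n))
  (Delta : 'M[C]_n -> 'M[C]_(n * n)) (S : 'M[C]_n -> 'M[C]_n)
  (eps : 'M[C]_n -> C) : Prop :=
  let M := inM MM in
  let e := Delta 1%:M in
  (M 1%:M /\
      (forall x y, M x -> M y -> M (x *m y)) /\
      (forall x, M x -> M (adjmx x))) /\
      ((forall a x y, Delta (a *: x + y) = a *: Delta x + Delta y) /\
          (forall x, M x -> inMM MM (Delta x)) /\
          (forall x y, M x -> M y -> Delta x = Delta y -> x = y) /\
          (forall x y, M x -> M y -> Delta (x *m y) = Delta x *m Delta y) /\
          (forall x, M x -> Delta (adjmx x) = adjmx (Delta x)) /\
          (forall x, M x ->
             castmx (esym (mulnA n n n), esym (mulnA n n n))
               (tensmap Delta id (Delta x)) = tensmap id Delta (Delta x))) /\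
      ((forall a x y, S (a *: x + y) = a *: S x + S y) /\
          (forall x, M x -> M (S x)) /\
          S 1%:M = 1%:M /\
          (forall x y, M x -> M y -> S (x *m y) = S y *m S x) /\
          (forall x, M x -> S (adjmx x) = adjmx (S x)) /\
          (forall x, M x -> S (S x) = x) /\
          (forall x, M x -> tensmap S S (Delta x) = flipmx (Delta (S x)))) /\
      ((forall a x y, eps (a *: x + y) = a * eps x + eps y) /\
          (forall x, M x -> epsl eps (Delta x) = x /\ epsr eps (Delta x) = x) /\
          (forall x, M x -> eps (S x) = eps x) /\
          (forall x, M x -> eps (adjmx x) = Num.conj (eps x)) /\
          (forall x y, M x -> M y ->
             tens_form (fun a b => eps a * eps b)
               (((x *t (1%:M : 'M[C]_n)) *m e) *m ((1%:M : 'M[C]_n) *t y))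
             = eps (x *m y)) /\
          (forall x, M x ->
             tensmap (fun z => mulmap (tensmap S id (Delta z))) id (Delta x)
             = ((1%:M : 'M[C]_n) *t x) *m e)).

Definition in_Ns m (MM : 'M[C]_(m, n * n))
  (Delta : 'M[C]_n -> 'M[C]_(n * n)) (x : 'M[C]_n) : Prop :=
  inM MM x /\ Delta x = Delta 1%:M *m ((1%:M : 'M[C]_n) *t x)
           /\ Delta x = ((1%:M : 'M[C]_n) *t x) *m Delta 1%:M.

End WKA.

(* Main.v *)
Require Import Defs.
From HB Require Import structures.
From mathcomp Require Import all_boot all_order all_algebra.
From mathcomp Require Import reals.
From mathcomp Require Import complex mxtens.
Import GRing.Theory Num.Theory.
Local Open Scope ring_scope.
Set Implicit Arguments. Unset Strict Implicit. Unset Printing Implicit Defensive.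
Section Gen.
Variable R : realType.
Local Notation C := (R[i]).

Definition lin (U V : lmodType C) (F : U -> V) :=
  forall c x y, F (c *: x + y) = c *: F x + F y.

Lemma lin0 (U V : lmodType C) (F : U -> V) : lin F -> F 0 = 0.
Proof.
by move=> HF; have := HF (-1) 0 0; rewrite scaler0 addr0 scaleN1r addNr.
Qed.

Lemma linD (U V : lmodType C) (F : U -> V) : lin F -> forall x y, F (x + y) = F x + F y.
Proof. by move=> HF x y; have := HF 1 x y; rewrite !scale1r. Qed.

Lemma linZ (U V : lmodType C) (F : U -> V) : lin F -> forall c x, F (c *: x) = c *: F x.
Proof. by move=> HF c x; rewrite -[c *: x]addr0 HF lin0 // addr0. Qed.

Lemma lin_sum (U V : lmodType C) (F : U -> V) (I : Type) (r : seq I) (P : pred I) (G : I -> U) :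
  lin F -> F (\sum_(i <- r | P i) G i) = \sum_(i <- r | P i) F (G i).
Proof. by move=> HF; apply: (big_morph F (linD HF) (lin0 HF)). Qed.

Lemma lin_comp (U V W : lmodType C) (F : V -> W) (G : U -> V) :
  lin F -> lin G -> lin (fun x => F (G x)).
Proof. by move=> HF HG c x y; rewrite HG HF. Qed.

Definition gext (T : lmodType C) p q (h : 'M[C]_p -> 'M[C]_q -> T) (X : 'M[C]_(p * q)) : T :=
  \sum_(i < p) \sum_(j < p) \sum_(k < q) \sum_(l < q)
    X (mxtens_index (i, k)) (mxtens_index (j, l)) *: h (delta_mx i j) (delta_mx k l).

Lemma tens_extE n (T : lmodType C) (h : 'M[C]_n -> 'M[C]_n -> T) X :
  tens_ext h X = gext h X.
Proof. by []. Qed.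

Lemma gext_lin (T : lmodType C) p q (h : 'M[C]_p -> 'M[C]_q -> T) : lin (gext h).
Proof.
move=> c X Y; rewrite /gext scaler_sumr -big_split; apply: eq_bigr => i _.
rewrite scaler_sumr -big_split; apply: eq_bigr => j _.
rewrite scaler_sumr -big_split; apply: eq_bigr => k _.
rewrite scaler_sumr -big_split; apply: eq_bigr => l _.
by rewrite !mxE scalerDl scalerA.
Qed.

Definition bilin (T : lmodType C) p q (h : 'M[C]_p -> 'M[C]_q -> T) :=
  (forall b, lin (h^~ b)) /\ (forall a, lin (h a)).

Lemma bilin_expand (T : lmodType C) p q (h : 'M[C]_p -> 'M[C]_q -> T) a b :
  bilin h -> h a b = \sum_(i < p) \sum_(j < p) \sum_(k < q) \sum_(l < q)
    (a i j * b k l) *: h (delta_mx i j) (delta_mx k l).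
Proof.
move=> [H1 H2]; rewrite {1}(matrix_sum_delta a) (lin_sum _ _ _ (H1 b)).
apply: eq_bigr => i _; rewrite (lin_sum _ _ _ (H1 b)); apply: eq_bigr => j _.
rewrite (linZ (H1 b)) {1}(matrix_sum_delta b) (lin_sum _ _ _ (H2 _)) scaler_sumr.
apply: eq_bigr => k _; rewrite (lin_sum _ _ _ (H2 _)) scaler_sumr.
by apply: eq_bigr => l _; rewrite (linZ (H2 _)) scalerA.
Qed.

Lemma gext_kron (T : lmodType C) p q (h : 'M[C]_p -> 'M[C]_q -> T) a b :
  bilin h -> gext h (a *t b) = h a b.
Proof.
move=> Hh; rewrite (bilin_expand _ _ Hh) /gext.
apply: eq_bigr => i _; apply: eq_bigr => j _; apply: eq_bigr => k _; apply: eq_bigr => l _.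
by rewrite tensmxE.
Qed.

Lemma kron_linl m1 n1 m2 n2 (b : 'M[C]_(m2, n2)) : lin (fun a : 'M[C]_(m1, n1) => a *t b).
Proof. by move=> c x y; apply/matrixP => i j; rewrite !mxE mulrDl mulrA. Qed.

Lemma kron_linr m1 n1 m2 n2 (a : 'M[C]_(m1, n1)) : lin (fun b : 'M[C]_(m2, n2) => a *t b).
Proof. by move=> c x y; apply/matrixP => i j; rewrite !mxE mulrDr mulrCA. Qed.

Lemma mxtens_index_eq p q (a c : 'I_p) (b d : 'I_q) :
  (mxtens_index (a, b) == mxtens_index (c, d)) = (a == c) && (b == d).
Proof. by rewrite (can_eq (@mxtens_indexK p q)). Qed.

Lemma delta_tens p q (i j : 'I_p) (k l : 'I_q) :
  delta_mx (mxtens_index (i, k)) (mxtens_index (j, l)) = delta_mx i j *t delta_mx k l :> 'M[C]_(p * q).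
Proof.
apply/matrixP => x y; case: (mxtens_indexP x) => x1 x2; case: (mxtens_indexP y) => y1 y2.
rewrite tensmxE !mxE !mxtens_index_eq.
by case: (x1 == i); case: (x2 == k); case: (y1 == j); case: (y2 == l); rewrite /= ?mulr0 ?mul0r ?mulr1.
Qed.

Lemma ext_kron (T : lmodType C) p q (F G : 'M[C]_(p * q) -> T) :
  lin F -> lin G -> (forall a b, F (a *t b) = G (a *t b)) -> forall X, F X = G X.
Proof.
move=> HF HG H X; rewrite (matrix_sum_delta X) (lin_sum _ _ _ HF) (lin_sum _ _ _ HG).
apply: eq_bigr => x _; rewrite (lin_sum _ _ _ HF) (lin_sum _ _ _ HG).
apply: eq_bigr => y _; rewrite (linZ HF) (linZ HG); congr (_ *: _).
case: (mxtens_indexP x) => x1 x2; case: (mxtens_indexP y) => y1 y2.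
by rewrite delta_tens H.
Qed.

Lemma lin_id (U : lmodType C) : lin (@id U).
Proof. by []. Qed.

Lemma bilin_tensmap n p q (f : 'M[C]_n -> 'M[C]_p) (g : 'M[C]_n -> 'M[C]_q) :
  lin f -> lin g -> bilin (fun a b => f a *t g b).
Proof.
move=> Hf Hg; split => [b|a] c x y /=.
  by rewrite Hf (kron_linl (g b)).
by rewrite Hg (kron_linr (f a)).
Qed.

Lemma tensmap_kron n p q (f : 'M[C]_n -> 'M[C]_p) (g : 'M[C]_n -> 'M[C]_q) a b :
  lin f -> lin g -> tensmap f g (a *t b) = f a *t g b.
Proof. by move=> Hf Hg; rewrite /tensmap tens_extE gext_kron //; apply: bilin_tensmap. Qed.

Lemma tensmap_lin n p q (f : 'M[C]_n -> 'M[C]_p) (g : 'M[C]_n -> 'M[C]_q) :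
  lin (tensmap f g).
Proof. exact: gext_lin. Qed.

Lemma flip_kron n (a b : 'M[C]_n) : flipmx (a *t b) = b *t a.
Proof.
rewrite /flipmx tens_extE gext_kron //; split => [b'|a'] c x y /=.
  by rewrite (kron_linr b').
by rewrite (kron_linl a').
Qed.

Lemma flip_lin n : lin (@flipmx R n).
Proof. exact: gext_lin. Qed.

Lemma flipK n (X : 'M[C]_(n * n)) : flipmx (flipmx X) = X.
Proof.
move: X; apply: (ext_kron (F := fun X => flipmx (flipmx X)) (G := id)) => //.
  by apply: lin_comp; apply: flip_lin.
by move=> a b; rewrite !flip_kron.
Qed.

Lemma mulmap_kron n (a b : 'M[C]_n) : mulmap (a *t b) = a *m b.
Proof.
rewrite /mulmap tens_extE gext_kron //; split => [b'|a'] c x y /=.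
  by rewrite mulmxDl scalemxAl.
by rewrite mulmxDr scalemxAr.
Qed.

Lemma mulmap_lin n : lin (@mulmap R n).
Proof. exact: gext_lin. Qed.

Lemma epsr_kron n (eps : 'M[C]_n -> C) (a b : 'M[C]_n) :
  (forall c x y, eps (c *: x + y) = c * eps x + eps y) ->
  epsr eps (a *t b) = eps b *: a.
Proof.
move=> He; rewrite /epsr tens_extE gext_kron //; split => [b'|a'] c x y /=.
  by rewrite scalerDr !scalerA mulrC.
by rewrite He scalerDl scalerA.
Qed.

Lemma epsr_lin n (eps : 'M[C]_n -> C) : lin (epsr eps).
Proof. exact: gext_lin. Qed.

End Gen.
Section Gen2.
Variable R : realType.
Local Notation C := (R[i]).

Definition sl p q (i j : 'I_p) (X : 'M[C]_(p * q)) : 'M[C]_q :=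
  \matrix_(k, l) X (mxtens_index (i, k)) (mxtens_index (j, l)).

Lemma sl_lin p q (i j : 'I_p) : lin (@sl p q i j).
Proof. by move=> c x y; apply/matrixP => k l; rewrite !mxE. Qed.

Lemma sl_kron p q (i j : 'I_p) (a : 'M[C]_p) (b : 'M[C]_q) : sl i j (a *t b) = a i j *: b.
Proof. by apply/matrixP => k l; rewrite [LHS]mxE tensmxE [RHS]mxE. Qed.

Lemma tens11 p q : (1%:M : 'M[C]_p) *t (1%:M : 'M[C]_q) = 1%:M.
Proof.
apply/matrixP => x y; case: (mxtens_indexP x) => x1 x2; case: (mxtens_indexP y) => y1 y2.
rewrite tensmxE !mxE mxtens_index_eq.
by case: (x1 == y1); case: (x2 == y2); rewrite /= ?mulr0 ?mul0r ?mulr1.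
Qed.

Lemma kron_assoc p q r (a : 'M[C]_p) (b : 'M[C]_q) (c : 'M[C]_r) :
  castmx (esym (mulnA p q r), esym (mulnA p q r)) ((a *t b) *t c) = a *t (b *t c).
Proof.
apply/matrixP => x y; case: (mxtens_indexP x) => x1 x'; case: (mxtens_indexP y) => y1 y'.
case: (mxtens_indexP x') => x2 x3; case: (mxtens_indexP y') => y2 y3.
rewrite castmxE.
have E : forall (u1 : 'I_p) (u2 : 'I_q) (u3 : 'I_r),
  cast_ord (esym (esym (mulnA p q r))) (mxtens_index (u1, mxtens_index (u2, u3)))
  = mxtens_index (mxtens_index (u1, u2), u3).
  move=> u1 u2 u3; apply: val_inj => /=.
  by rewrite mulnDl -mulnA addnA.
by rewrite !E !tensmxE mulrA.
Qed.

Lemma castmx_lin p q p' q' (eq : (p = p') * (q = q')) : lin (@castmx C p q p' q' eq).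
Proof. by move=> c x y; apply/matrixP => i j; rewrite !castmxE !mxE !castmxE. Qed.

Lemma mulmxl_lin p q r (A : 'M[C]_(p, q)) : lin (fun X : 'M[C]_(q, r) => A *m X).
Proof. by move=> c x y; rewrite mulmxDr scalemxAr. Qed.

Lemma mulmxr_lin p q r (B : 'M[C]_(q, r)) : lin (fun X : 'M[C]_(p, q) => X *m B).
Proof. by move=> c x y; rewrite mulmxDl scalemxAl. Qed.

Lemma adjmx_mul p q r (A : 'M[C]_(p, q)) (B : 'M[C]_(q, r)) :
  adjmx (A *m B) = adjmx B *m adjmx A.
Proof. by rewrite /adjmx map_mxM trmx_mul. Qed.

Lemma adjmx_tens p q r s (A : 'M[C]_(p, q)) (B : 'M[C]_(r, s)) :
  adjmx (A *t B) = adjmx A *t adjmx B.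
Proof. by rewrite /adjmx map_mxT trmx_tens. Qed.

Lemma adjmx1 p : adjmx (1%:M : 'M[C]_p) = 1%:M.
Proof. by apply/matrixP => i j; rewrite !mxE eq_sym rmorph_nat. Qed.

Lemma lin_sumf (U V : lmodType C) (I : Type) (s : seq I) (F : I -> U -> V) :
  (forall i, lin (F i)) -> lin (fun x => \sum_(i <- s) F i x).
Proof.
move=> H c x y; rewrite scaler_sumr -big_split; apply: eq_bigr => i _; exact: H.
Qed.

Lemma sl_decomp p q (X : 'M[C]_(p * q)) :
  X = \sum_(i < p) \sum_(j < p) delta_mx i j *t sl i j X.
Proof.
move: X; apply: (ext_kron (F := id) (G := fun X => \sum_(i < p) \sum_(j < p) delta_mx i j *t sl i j X)) => //.
  apply: lin_sumf => i; apply: lin_sumf => j.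
  by apply: lin_comp; [apply: kron_linr | apply: sl_lin].
move=> x y /=; rewrite {1}(matrix_sum_delta x) (lin_sum _ _ _ (kron_linl y)).
apply: eq_bigr => i _; rewrite (lin_sum _ _ _ (kron_linl y)); apply: eq_bigr => j _.
by rewrite sl_kron (linZ (kron_linl y)) (linZ (kron_linr _)).
Qed.

End Gen2.
Section Main.
Variables (R : realType) (n m : nat) (MM : 'M[R[i]]_(m, n * n))
  (Delta : 'M[R[i]]_n -> 'M[R[i]]_(n * n)) (S : 'M[R[i]]_n -> 'M[R[i]]_n)
  (eps : 'M[R[i]]_n -> R[i]).
Local Notation C := (R[i]).
Local Notation M := (inM MM).
Local Notation e := (Delta 1%:M).
Local Notation "'1" := (1%:M : 'M[C]_n).
Hypothesis HM1 : M 1%:M.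
Hypothesis HMmul : forall x y, M x -> M y -> M (x *m y).
Hypothesis HDlin : lin Delta.
Hypothesis HDM : forall x, M x -> inMM MM (Delta x).
Hypothesis HDmul : forall x y, M x -> M y -> Delta (x *m y) = Delta x *m Delta y.
Hypothesis HDadj : forall x, M x -> Delta (adjmx x) = adjmx (Delta x).
Hypothesis HDco : forall x, M x ->
  castmx (esym (mulnA n n n), esym (mulnA n n n)) (tensmap Delta id (Delta x))
  = tensmap id Delta (Delta x).
Hypothesis HSlin : lin S.
Hypothesis HSM : forall x, M x -> M (S x).
Hypothesis HS1 : S 1%:M = 1%:M.
Hypothesis HSmul : forall x y, M x -> M y -> S (x *m y) = S y *m S x.
Hypothesis HSS : forall x, M x -> S (S x) = x.
Hypothesis HSflip : forall x, M x -> tensmap S S (Delta x) = flipmx (Delta (S x)).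
Hypothesis Heps : forall a x y, eps (a *: x + y) = a * eps x + eps y.
Hypothesis Hcounit : forall x, M x -> epsr eps (Delta x) = x.
Hypothesis HA : forall x, M x ->
  tensmap (fun z => mulmap (tensmap S id (Delta z))) id (Delta x) = ('1 *t x) *m e.

Variables (r : nat) (a b : 'I_r -> 'M[C]_n).
Hypothesis Hab : forall t, M (a t) /\ M (b t).
Hypothesis Hrep : e = \sum_(t < r) a t *t b t.

Local Notation msr := (@mulmx_sumr _ (n*n) (n*n) (n*n)).
Local Notation msl := (@mulmx_suml _ (n*n) (n*n) (n*n)).

Definition es z := mulmap (tensmap S id (Delta z)).

Lemma M_lin c x y : M x -> M y -> M (c *: x + y).
Proof. by rewrite /inM => Hx Hy; rewrite linearD linearZ /= addmx_sub ?scalemx_sub. Qed.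

Lemma M0 : M 0.
Proof. by rewrite /inM linear0 sub0mx. Qed.

Lemma M_sum (I : Type) (s : seq I) (P : pred I) (F : I -> 'M[C]_n) :
  (forall i, P i -> M (F i)) -> M (\sum_(i <- s | P i) F i).
Proof.
move=> H; elim/big_ind: _ => //; first exact: M0.
by move=> x y Hx Hy; rewrite -[x]scale1r; apply: M_lin.
Qed.

Lemma es_lin : lin es.
Proof. apply: lin_comp; first exact: mulmap_lin. apply: lin_comp => //; exact: tensmap_lin. Qed.

Lemma tm_sum p q (f : 'M[C]_n -> 'M[C]_p) (g : 'M[C]_n -> 'M[C]_q) (I : Type) (s : seq I)
  (x y : I -> 'M[C]_n) : lin f -> lin g ->
  tensmap f g (\sum_(t <- s) x t *t y t) = \sum_(t <- s) f (x t) *t g (y t).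
Proof.
move=> Hf Hg; rewrite (lin_sum _ _ _ (tensmap_lin f g)).
by apply: eq_bigr => t _; rewrite tensmap_kron.
Qed.

Lemma mulS_sum (I : Type) (s : seq I) (x y : I -> 'M[C]_n) :
  mulmap (tensmap S id (\sum_(t <- s) x t *t y t)) = \sum_(t <- s) S (x t) *m y t.
Proof.
rewrite tm_sum // (lin_sum _ _ _ (@mulmap_lin _ _)).
by apply: eq_bigr => t _; rewrite mulmap_kron.
Qed.

Lemma flip_sum (I : Type) (s : seq I) (x y : I -> 'M[C]_n) :
  flipmx (\sum_(t <- s) x t *t y t) = \sum_(t <- s) y t *t x t.
Proof.
rewrite (lin_sum _ _ _ (@flip_lin _ _)).
by apply: eq_bigr => t _; rewrite flip_kron.
Qed.

Lemma HA1 : tensmap es id e = e.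
Proof. by have := HA HM1; rewrite tens11 mul1mx. Qed.

Lemma F1 : \sum_(t < r) S (a t) *m b t = 1%:M.
Proof.
have h1 : epsr eps (tensmap es id e) = 1%:M by rewrite HA1 Hcounit.
have h2 : epsr eps (tensmap es id e) = es (epsr eps e).
  rewrite Hrep tm_sum //; last exact: es_lin.
  rewrite (lin_sum _ _ _ (epsr_lin eps)) (lin_sum _ _ _ (epsr_lin eps)).
  rewrite (lin_sum _ _ _ es_lin); apply: eq_bigr => t _.
  by rewrite !epsr_kron // (linZ es_lin).
rewrite Hcounit // in h2.
transitivity (es 1%:M); first by rewrite /es Hrep mulS_sum.
by rewrite -h2 h1.
Qed.

Lemma F1b : \sum_(t < r) S (b t) *m a t = 1%:M.
Proof.
rewrite -HS1 -F1 (lin_sum _ _ _ HSlin); apply: eq_bigr => t _.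
by case: (Hab t) => Ha Hb; rewrite HSmul ?HSS //; apply: HSM.
Qed.

Lemma Esym : e = \sum_(t < r) S (b t) *t S (a t).
Proof.
have h := HSflip HM1; rewrite HS1 in h.
by rewrite -[LHS]flipK -h Hrep tm_sum // flip_sum.
Qed.

Definition Ns z := in_Ns MM Delta z.

Lemma DeltaS_flip x : M x -> Delta (S x) = flipmx (tensmap S S (Delta x)).
Proof. by move=> Hx; rewrite HSflip // flipK. Qed.

Lemma DS z : Ns z -> Delta (S z) = (S z *t '1) *m e /\ Delta (S z) = e *m (S z *t '1).
Proof.
move=> [Hz [H1 H2]]; rewrite DeltaS_flip //; split.
  rewrite H1 {1}Hrep msl.
  under eq_bigr => t _ do rewrite tensmx_mul mulmx1.
  rewrite tm_sum // flip_sum. rewrite Esym msr; apply: eq_bigr => t _.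
  by case: (Hab t) => Ha Hb; rewrite tensmx_mul mul1mx HSmul.
rewrite H2 {1}Hrep msr.
under eq_bigr => t _ do rewrite tensmx_mul mul1mx.
rewrite tm_sum // flip_sum Esym msl; apply: eq_bigr => t _.
by case: (Hab t) => Ha Hb; rewrite tensmx_mul mulmx1 HSmul.
Qed.

Lemma es_mulS y z : M y -> Ns z -> es (y *m S z) = z *m es y.
Proof.
move=> Hy Hz; have [Hz1 _] := Hz; have HSz := HSM Hz1.
have [_ HD] := DS Hz.
have E : Delta (y *m S z) = Delta y *m (S z *t '1).
  by rewrite HDmul // HD mulmxA -HDmul // mulmx1.
have [r' [c [d [Hcd Hy']]]] := HDM Hy.
rewrite /es E Hy' msl.
under eq_bigr => t _ do rewrite tensmx_mul mulmx1.
rewrite !mulS_sum mulmx_sumr; apply: eq_bigr => t _.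
by case: (Hcd t) => Hc Hd; rewrite HSmul // HSS // mulmxA.
Qed.

Lemma sep z : Ns z -> (z *t '1) *m e = ('1 *t S z) *m e.
Proof.
move=> Hz; have [Hz1 _] := Hz; have HSz := HSM Hz1.
have [_ HD] := DS Hz.
rewrite -HA // HD {2}Hrep msl.
under eq_bigr => t _ do rewrite tensmx_mul mulmx1.
rewrite tm_sum //; last exact: es_lin.
rewrite -{1}HA1 {1}Hrep tm_sum //; last exact: es_lin.
rewrite msr; apply: eq_bigr => t _.
case: (Hab t) => Ha Hb.
by rewrite tensmx_mul mul1mx -[mulmap _]/(es _) es_mulS.
Qed.

Definition w i j := sl i j e.

Lemma w_rep i j : w i j = \sum_(t < r) a t i j *: b t.
Proof. by rewrite /w Hrep (lin_sum _ _ _ (sl_lin i j)); apply: eq_bigr => t _; rewrite sl_kron. Qed.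

Lemma w_M i j : M (w i j).
Proof.
rewrite w_rep; apply: M_sum => t _; rewrite -[_ *: _]addr0; apply: M_lin; last exact: M0.
by case: (Hab t).
Qed.

Lemma e_w : e = \sum_(i < n) \sum_(j < n) delta_mx i j *t w i j.
Proof. exact: sl_decomp. Qed.

Lemma bilin_es : bilin (fun (x : 'M[C]_n) (B : 'M[C]_(n * n)) => es x *t B).
Proof.
split => [B|x] c u v /=; first by rewrite es_lin (kron_linl B).
by rewrite (kron_linr (es x)).
Qed.

Definition T3 i j (Y : 'M[C]_(n * (n * n))) : 'M[C]_(n * n) :=
  sl i j (gext (fun (x : 'M[C]_n) (B : 'M[C]_(n * n)) => es x *t B) Y).

Lemma T3_lin i j : lin (T3 i j).
Proof. apply: lin_comp; [apply: sl_lin | apply: gext_lin]. Qed.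

Lemma Phi_cast i j (v : 'M[C]_n) (X : 'M[C]_(n * n)) :
  T3 i j (castmx (esym (mulnA n n n), esym (mulnA n n n)) (X *t v))
  = sl i j (tensmap es id X) *t v.
Proof.
move: X; apply: (ext_kron (F := fun X => T3 i j (castmx (esym (mulnA n n n), esym (mulnA n n n)) (X *t v)))
   (G := fun X => sl i j (tensmap es id X) *t v)).
- apply: lin_comp; first exact: T3_lin.
  apply: lin_comp; [apply: castmx_lin | apply: kron_linl].
- apply: (lin_comp (F := fun B : 'M[C]_n => B *t v) (G := fun X => sl i j (tensmap es id X))); first exact: kron_linl.
  apply: lin_comp; [apply: sl_lin | apply: tensmap_lin].
move=> x y /=; rewrite kron_assoc /T3 gext_kron; last exact: bilin_es.
rewrite sl_kron tensmap_kron //; last exact: es_lin.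
by rewrite sl_kron (linZ (kron_linl v)).
Qed.

Lemma sl_mul1 i j (x : 'M[C]_n) (X : 'M[C]_(n * n)) :
  sl i j (('1 *t x) *m X) = x *m sl i j X.
Proof.
move: X; apply: (ext_kron (F := fun X => sl i j (('1 *t x) *m X)) (G := fun X => x *m sl i j X)).
- apply: lin_comp; [apply: sl_lin | apply: mulmxl_lin].
- apply: lin_comp; [apply: mulmxl_lin | apply: sl_lin].
by move=> u v /=; rewrite tensmx_mul mul1mx !sl_kron scalemxAr.
Qed.

Lemma Dw i j : Delta (w i j) = e *m (w i j *t '1).
Proof.
have h := HDco HM1.
have L : T3 i j (castmx (esym (mulnA n n n), esym (mulnA n n n)) (tensmap Delta id e))
   = \sum_(t < r) (a t *m w i j) *t b t.
  rewrite {1}Hrep tm_sum //.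
  have Hl : lin (fun Y => T3 i j (castmx (esym (mulnA n n n), esym (mulnA n n n)) Y)).
    apply: lin_comp; [apply: T3_lin | apply: castmx_lin].
  rewrite (lin_sum _ _ _ Hl); apply: eq_bigr => t _.
  case: (Hab t) => Ha Hb.
  by rewrite Phi_cast HA // sl_mul1.
have Rr : T3 i j (tensmap id Delta e) = Delta (w i j).
  transitivity (Delta (sl i j (tensmap es id e))); last by rewrite HA1.
  rewrite Hrep (tm_sum _ _ _ es_lin (fun c x y => erefl)) (tm_sum _ _ _ (fun c x y => erefl) HDlin).
  rewrite (lin_sum _ _ _ (T3_lin i j)) (lin_sum _ _ _ (sl_lin i j)) (lin_sum _ _ _ HDlin).
  apply: eq_bigr => t _; rewrite /T3 gext_kron; last exact: bilin_es.
  by rewrite !sl_kron (linZ HDlin).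
rewrite -Rr -h L Hrep msl; apply: eq_bigr => t _.
by rewrite tensmx_mul mulmx1.
Qed.

Lemma adj_e : adjmx e = e.
Proof. by rewrite -HDadj // adjmx1. Qed.

Lemma w_adj i j : adjmx (w i j) = w j i.
Proof.
apply/matrixP => k l.
transitivity ((adjmx e) (mxtens_index (j, k)) (mxtens_index (i, l))); first by rewrite !mxE.
by rewrite adj_e !mxE.
Qed.

Lemma Dw' i j : Delta (w i j) = (w i j *t '1) *m e.
Proof.
rewrite -(w_adj j i) HDadj; last exact: w_M.
by rewrite Dw adjmx_mul adjmx_tens adjmx1 adj_e.
Qed.

Lemma SwNs i j : Ns (S (w i j)).
Proof.
have Hw := w_M i j; have HSw := HSM Hw.
split => //; rewrite DeltaS_flip //; split.
  rewrite Dw' {1}Hrep msr.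
  under eq_bigr => t _ do rewrite tensmx_mul mul1mx.
  rewrite tm_sum // flip_sum Esym msl; apply: eq_bigr => t _.
  by case: (Hab t) => Ha Hb; rewrite tensmx_mul mulmx1 HSmul.
rewrite Dw {1}Hrep msl.
under eq_bigr => t _ do rewrite tensmx_mul mulmx1.
rewrite tm_sum // flip_sum Esym msr; apply: eq_bigr => t _.
by case: (Hab t) => Ha Hb; rewrite tensmx_mul mul1mx HSmul.
Qed.

Unset Implicit Arguments.
Variables (K : nat) (na : 'I_K -> nat)
  (f : forall al : 'I_K, 'I_(na al) -> 'I_(na al) -> 'M[C]_n).
Set Implicit Arguments.
Hypothesis Hna : forall al, (0 < na al)%N.
Hypothesis Hfab : forall (al be : 'I_K) (p q : 'I_(na al)) (r1 s1 : 'I_(na be)),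
  al != be -> f al p q *m f be r1 s1 = 0.
Hypothesis Hff : forall (al : 'I_K) (p q r1 s1 : 'I_(na al)),
  f al p q *m f al r1 s1 = if q == r1 then f al p s1 else 0.
Hypothesis Hsum1 : \sum_(al < K) \sum_(p < na al) f al p p = 1%:M.
Hypothesis Hspan : forall x, Ns x <->
     exists c : forall al : 'I_K, 'I_(na al) -> 'I_(na al) -> C,
       x = \sum_(al < K) \sum_(p < na al) \sum_(q < na al) c al p q *: f al p q.

Definition g := \sum_(al < K) (na al)%:R^-1 *:
      \sum_(p < na al) \sum_(q < na al) (f al p q *t S (f al q p)).

Lemma f_Ns al p q : Ns (f al p q).
Proof.
apply/Hspan.
exists (fun be r' s => ((al == be) && (nat_of_ord p == nat_of_ord r') && (nat_of_ord q == nat_of_ord s))%:R).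
symmetry; rewrite (bigD1 al) //= [X in _ + X]big1 ?addr0; last first.
  move=> be Hbe; apply: big1 => r' _; apply: big1 => s _.
  by rewrite eq_sym (negbTE Hbe) /= scale0r.
rewrite eqxx (bigD1 p) //= [X in _ + X]big1 ?addr0; last first.
  move=> r' Hr; apply: big1 => s _.
  have -> : (nat_of_ord p == nat_of_ord r') = false by rewrite eq_sym; apply: negbTE.
  by rewrite /= scale0r.
rewrite (bigD1 q) //= [X in _ + X]big1 ?addr0; last first.
  move=> s Hs.
  have -> : (nat_of_ord q == nat_of_ord s) = false by rewrite eq_sym; apply: negbTE.
  by rewrite andbF scale0r.
by rewrite !eqxx scale1r.
Qed.

Lemma f_M al p q : M (f al p q).
Proof. by case: (f_Ns p q). Qed.

Lemma g_e : g *m e = e.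
Proof.
have E : forall al p q, (f al p q *t S (f al q p)) *m e = ('1 *t S (f al p p)) *m e.
  move=> al p q.
  have -> : f al p q *t S (f al q p) = ('1 *t S (f al q p)) *m (f al p q *t '1).
    by rewrite tensmx_mul mul1mx mulmx1.
  rewrite -mulmxA sep; last exact: f_Ns.
  rewrite mulmxA tensmx_mul mul1mx -HSmul; try exact: f_M.
  by rewrite (Hff p q q p) eqxx.
transitivity (('1 *t S (\sum_(al < K) \sum_(p < na al) f al p p)) *m e); last first.
  by rewrite Hsum1 HS1 tens11 mul1mx.
rewrite /g msl (lin_sum _ _ _ HSlin) (lin_sum _ _ _ (kron_linr _)) msl.
apply: eq_bigr => al _.
rewrite -scalemxAl msl (lin_sum _ _ _ HSlin) (lin_sum _ _ _ (kron_linr _)) msl.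
rewrite [in RHS](eq_bigr (fun p => \sum_(q < na al) (na al)%:R^-1 *: (('1 *t S (f al p p)) *m e))); last first.
  move=> p _; rewrite sumr_const card_ord. rewrite scalerMnl -mulr_natr mulVf ?scale1r //.
  by rewrite pnatr_eq0 -lt0n Hna.
rewrite scaler_sumr; apply: eq_bigr => p _.
rewrite msl scaler_sumr; apply: eq_bigr => q _.
by rewrite E.
Qed.

Lemma g_f be x y : g *m ('1 *t S (f be x y)) = g *m (f be x y *t '1).
Proof.
rewrite /g !msl; apply: eq_bigr => al _; rewrite -!scalemxAl; congr (_ *: _).
rewrite !msl; apply: eq_bigr => p _; rewrite !msl.
under eq_bigr => q _ do rewrite tensmx_mul mulmx1 -(HSmul (f_M _ _) (f_M _ _)).
under [in RHS]eq_bigr => q _ do rewrite tensmx_mul mulmx1.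
case: (eqVneq al be) => [Heq|Hne]; last first.
  rewrite big1; last by move=> q _; rewrite Hfab 1?eq_sym // (lin0 HSlin) tensmx0.
  by rewrite big1 // => q _; rewrite Hfab // tens0mx.
subst be; under eq_bigr => q _ do rewrite Hff.
under [in RHS]eq_bigr => q _ do rewrite Hff.
rewrite (bigD1 y) //= eqxx big1 ?addr0; last first.
  by move=> q Hq; rewrite eq_sym (negbTE Hq) (lin0 HSlin) tensmx0.
rewrite (bigD1 x) //= eqxx big1 ?addr0 //.
by move=> q Hq; rewrite (negbTE Hq) tens0mx.
Qed.

Lemma g_span z : Ns z -> g *m ('1 *t S z) = g *m (z *t '1).
Proof.
case/Hspan => c ->.
have L1 : lin (fun z : 'M[C]_n => g *m ('1 *t S z)).
  by move=> c' x y /=; rewrite HSlin (kron_linr '1) mulmxDr scalemxAr.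
have L2 : lin (fun z : 'M[C]_n => g *m (z *t '1)).
  by move=> c' x y /=; rewrite (kron_linl '1) mulmxDr scalemxAr.
rewrite (lin_sum _ _ _ L1) (lin_sum _ _ _ L2); apply: eq_bigr => al _.
rewrite (lin_sum _ _ _ L1) (lin_sum _ _ _ L2); apply: eq_bigr => p _.
rewrite (lin_sum _ _ _ L1) (lin_sum _ _ _ L2); apply: eq_bigr => q _.
by rewrite (linZ L1) (linZ L2) /= g_f.
Qed.

Lemma sumSw : \sum_(i < n) \sum_(j < n) S (w i j) *m delta_mx i j = 1%:M.
Proof.
rewrite -F1b.
under eq_bigr => i _ do under eq_bigr => j _ do
  rewrite w_rep (lin_sum _ _ _ HSlin) mulmx_suml.
under eq_bigr => i _ do rewrite exchange_big.
rewrite exchange_big; apply: eq_bigr => t _.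
rewrite {2}(matrix_sum_delta (a t)) mulmx_sumr; apply: eq_bigr => i _.
rewrite mulmx_sumr; apply: eq_bigr => j _.
by rewrite (linZ HSlin) -scalemxAl scalemxAr.
Qed.

Lemma g_e' : g *m e = g.
Proof.
rewrite {1}e_w msr.
transitivity (g *m ((\sum_(i < n) \sum_(j < n) S (w i j) *m delta_mx i j) *t '1)); last first.
  by rewrite sumSw tens11 mulmx1.
rewrite (lin_sum _ _ _ (kron_linl _)) msr; apply: eq_bigr => i _.
rewrite msr (lin_sum _ _ _ (kron_linl _)) msr; apply: eq_bigr => j _.
have -> : delta_mx i j *t w i j = ('1 *t w i j) *m (delta_mx i j *t '1).
  by rewrite tensmx_mul mul1mx mulmx1.
rewrite -{1}(HSS (w_M i j)) mulmxA g_span; last exact: SwNs.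
by rewrite -mulmxA tensmx_mul mulmx1.
Qed.

Lemma e_g : e = g.
Proof. by rewrite -[LHS]g_e g_e'. Qed.

End Main.

Theorem proposition2p1p11 (R : realType) (n m : nat) (MM : 'M[R[i]]_(m, n * n))
  (Delta : 'M[R[i]]_n -> 'M[R[i]]_(n * n)) (S : 'M[R[i]]_n -> 'M[R[i]]_n)
  (eps : 'M[R[i]]_n -> R[i])
  (K : nat) (na : 'I_K -> nat)
  (f : forall a : 'I_K, 'I_(na a) -> 'I_(na a) -> 'M[R[i]]_n) :
  is_weak_Kac MM Delta S eps ->
  (forall a, (0 < na a)%N) ->
  (* system of matrix units spanning N_s *)
  (forall a p q, f a p q != 0) ->
  (forall a b p q r s, a != b -> f a p q *m f b r s = 0) ->
  (forall a p q r s, f a p q *m f a r s = if q == r then f a p s else 0) ->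
  (forall a p q, adjmx (f a p q) = f a q p) ->
  \sum_(a < K) \sum_(p < na a) f a p p = 1%:M ->
  (forall x, in_Ns MM Delta x <->
     exists c : forall a : 'I_K, 'I_(na a) -> 'I_(na a) -> R[i],
       x = \sum_(a < K) \sum_(p < na a) \sum_(q < na a) c a p q *: f a p q) ->
  Delta 1%:M =
    \sum_(a < K) (na a)%:R^-1 *:
      \sum_(p < na a) \sum_(q < na a) (f a p q *t S (f a q p)).
Proof.
move=> [[HM1 [HMmul HMadj]] [[HDlin [HDM [HDinj [HDmul [HDadj HDco]]]]]
  [[HSlin [HSM [HS1 [HSmul [HSadj [HSS HSflip]]]]]]
  [Heps [Hcounit [HepsS [Hepsadj [Heps2 HA]]]]]]]].
move=> Hna Hnz Hfab Hff Hadjf Hsum1 Hspan.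
have Hcounit' : forall x, inM MM x -> epsr eps (Delta x) = x.
  by move=> x Hx; case: (Hcounit x Hx).
have [r [a [b [Hab Hrep]]]] := HDM _ HM1.
apply: e_g; eassumption.
Qed.
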